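(* Let $T$ be a synthesis task, $D$ a probability distribution over examples of $T$, $n_0\ge 1$ an integer, and $\mathcal S$ a solver for $T$ that, given a finite collection of examples, returns a program satisfying all of them. Consider the iterative algorithm: set $t\leftarrow 1$, $n_s\leftarrow n_0$; repeatedly draw $n_s$ examples independently from $D$, run $\mathcal S$ on them obtaining program $q$; if $\mathrm{size}(q)\le t$ return $q$, otherwise set $t\leftarrow 2t$, $n_s\leftarrow 2n_s$ and repeat. Then: (1) For every $\epsilon\in(2\ln 2/n_0,\,1)$, the probability that the algorithm terminates returning a program $q$ with $\mathrm{err}_D(q)\ge\epsilon$ is at most $4\exp(-\epsilon n_0)$. (2) If $T$ has at least one correct program and $\mathcal S$ is an $(\alpha,\beta)$-Occam solver for some constants $\alpha\ge1$, $0\le\beta<1$, then the algorithm always terminates.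
   Context: $\mathrm{size}(q)$ is the length of the binary representation of program $q$; in particular, for every $j\ge1$ there are at most $2^j$ programs of size at most $j$. $\mathrm{err}_D(q)$ is the probability that $q$ violates (does not satisfy) an example drawn from $D$. A correct program of $T$ is one satisfying every example of $T$. A solver $\mathcal S$ is an $(\alpha,\beta)$-Occam solver (for constants $\alpha\ge1$, $0\le\beta<1$) if there is a constant $c$ such that for every finite set $E$ of examples and every correct program $p^*$ of $T$, the program returned by $\mathcal S$ on $E$ has size at most $c\,(\mathrm{size}(p^* ))^{\alpha}|E|^{\beta}$. *)

(* Defs.v *)
From HB Require Import structures.
From mathcomp Require Import all_boot all_order all_algebra.
From mathcomp Require Import all_classical all_reals all_analysis.
Set Implicit Arguments. Unset Strict Implicit. Unset Printing Implicit Defensive.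
Import Order.TTheory GRing.Theory Num.Theory.
Local Open Scope classical_set_scope.
Local Open Scope ring_scope.

(* A synthesis task T is given by a type of programs [Prog], a type of
   examples [E] and a satisfaction relation [sat q e] ("q satisfies e"). *)

Definition correct (Prog E : Type) (sat : Prog -> E -> bool) (p : Prog) : Prop :=
  forall e : E, sat p e.

Definition size_count (Prog : eqType) (psize : Prog -> nat) : Prop :=
  forall j : nat, (1 <= j)%N -> forall l : seq Prog, uniq l ->
    all (fun q => (psize q <= j)%N) l -> (size l <= 2 ^ j)%N.

Definition solver_consistent (Prog E : Type) (sat : Prog -> E -> bool)
  (S : seq E -> Prog) : Prop :=
  forall s : seq E, all (sat (S s)) s.

Definition occam (R : realType) (Prog E : Type) (sat : Prog -> E -> bool)
  (psize : Prog -> nat) (S : seq E -> Prog) (alpha beta : R) : Prop :=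
  exists c : R, forall (s : seq E) (p : Prog), correct sat p ->
    (psize (S s))%:R <= c * ((psize p)%:R `^ alpha) * ((size s)%:R `^ beta).

Definition err (R : realType) (d : measure_display) (E : measurableType d)
  (Prog : Type) (D : probability E R) (sat : Prog -> E -> bool) (q : Prog)
  : \bar R :=
  D [set e | ~~ sat q e].

Definition iid (R : realType) (dO dE : measure_display) (Omega : measurableType dO)
  (E : measurableType dE) (P : probability Omega R) (D : probability E R)
  (X : nat -> Omega -> E) : Prop :=
  (forall i, measurable_fun setT (X i)) /\
  forall (l : seq nat), uniq l -> forall A : nat -> set E,
    (forall i, measurable (A i)) ->
    P [set w | forall i, i \in l -> A i (X i w)] =
      (\prod_(i <- l) fine (D (A i)))%:E.

(* The algorithm.  Round k (k = 0,1,2,...) uses t = 2^k and n_s = n0 * 2^k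
   fresh examples, namely X_i for i in [n0*(2^k-1), n0*(2^(k+1)-1)). *)
Definition round_sample (Omega E : Type) (X : nat -> Omega -> E) (n0 k : nat)
  (w : Omega) : seq E :=
  [seq X i w | i <- iota (n0 * (2 ^ k - 1)) (n0 * 2 ^ k)].

Definition round_prog (Omega E Prog : Type) (S : seq E -> Prog)
  (X : nat -> Omega -> E) (n0 k : nat) (w : Omega) : Prog :=
  S (round_sample X n0 k w).

Definition stops_at (Omega E Prog : Type) (psize : Prog -> nat)
  (S : seq E -> Prog) (X : nat -> Omega -> E) (n0 k : nat) (w : Omega) : Prop :=
  (psize (round_prog S X n0 k w) <= 2 ^ k)%N /\
  (forall j, (j < k)%N -> (2 ^ j < psize (round_prog S X n0 j w))%N).

(* Main.v *)
Require Import Defs.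
From HB Require Import structures.
From mathcomp Require Import all_boot all_order all_algebra.
From mathcomp Require Import all_classical all_reals all_analysis.
From mathcomp Require Import ring lra.
Import Order.TTheory GRing.Theory Num.Theory.
Local Open Scope classical_set_scope.
Local Open Scope ring_scope.

Lemma enum_le (Prog : eqType) (psize : Prog -> nat) (m : nat) :
  size_count psize -> (1 <= m)%N ->
  exists L : seq Prog, uniq L /\ forall q, (q \in L) = (psize q <= m)%N.
Proof.
move=> sc m1.
pose P := fun n : nat => `[< exists L : seq Prog,
   [/\ uniq L, all (fun q => psize q <= m)%N L & size L = n] >].
have ex0 : exists i, P i by exists 0%N; apply/asboolP; exists [::].
have ub : forall i, P i -> (i <= 2 ^ m)%N.
  by move=> i /asboolP [L [u a <-]]; exact: sc.
case: (ex_maxnP ex0 ub) => n /asboolP [L [u a sz]] hmax.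
exists L; split => // q.
apply/idP/idP; first by move=> qL; exact: (allP a).
move=> qm; apply/negPn/negP => qL.
have : P n.+1.
  apply/asboolP; exists (q :: L); split => /=; first by rewrite qL.
  - by rewrite qm.
  - by rewrite sz.
by move/hmax; rewrite ltnn.
Qed.

Lemma meas_pred_list (d : measure_display) (Omega : measurableType d) (Prog : eqType)
  (f : Omega -> Prog) (Q : Prog -> Prop) :
  (forall q, measurable [set w | f w = q]) ->
  forall L : seq Prog, measurable [set w | f w \in L /\ Q (f w)].
Proof.
move=> hf; elim => [|q L IH].
  by rewrite (_ : [set w | _ ] = set0) //; apply/seteqP; split => w //=; case.
case: (pselect (Q q)) => Qq.
  rewrite (_ : [set w | _] = [set w | f w = q] `|` [set w | f w \in L /\ Q (f w)]).
    exact: measurableU.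
  apply/seteqP; split => w /=.
    by case; rewrite in_cons => /orP [/eqP -> _| wL Qw]; [left | right].
  case=> [-> | [wL Qw]]; split; rewrite ?in_cons ?eqxx ?wL ?orbT //.
rewrite (_ : [set w | _] = [set w | f w \in L /\ Q (f w)]) //.
apply/seteqP; split => w /=.
  case; rewrite in_cons => /orP [/eqP -> //| wL Qw]; by [].
by case=> wL Qw; rewrite in_cons wL orbT.
Qed.

Lemma meas_pred (d : measure_display) (Omega : measurableType d) (Prog : eqType)
  (psize : Prog -> nat) (m : nat) (f : Omega -> Prog) (Q : Prog -> Prop) :
  size_count psize -> (1 <= m)%N ->
  (forall q, measurable [set w | f w = q]) ->
  (forall q, Q q -> (psize q <= m)%N) ->
  measurable [set w | Q (f w)].
Proof.
move=> sc m1 hf hQ.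
have [L [_ HL]] := @enum_le Prog psize m sc m1.
rewrite (_ : [set w | _] = [set w | f w \in L /\ Q (f w)]); first exact: meas_pred_list.
apply/seteqP; split => w /=; last by case.
by move=> Qw; split => //; rewrite HL hQ.
Qed.

Lemma meas_prefix (d : measure_display) (Omega : measurableType d) (Prog : eqType)
  (psize : Prog -> nat) (f : nat -> Omega -> Prog) :
  size_count psize -> (forall k q, measurable [set w | f k w = q]) ->
  forall k, measurable [set w | forall j, (j < k)%N -> (2 ^ j < psize (f j w))%N].
Proof.
move=> sc hf; elim => [|k IH].
  by rewrite (_ : [set w | _ ] = setT) //; apply/seteqP; split => w //=.
rewrite (_ : [set w | _] = [set w | forall j, (j < k)%N -> (2 ^ j < psize (f j w))%N]
   `&` ~` [set w | (psize (f k w) <= 2 ^ k)%N]).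
  apply: measurableI => //; apply: measurableC.
  apply: (@meas_pred _ _ _ psize (2 ^ k)%N (f k) (fun q => (psize q <= 2 ^ k)%N) sc) => //.
  by rewrite expn_gt0.
apply/seteqP; split => w /=.
  move=> H; split; first by move=> j jk; apply: H; rewrite ltnS ltnW.
  by apply/negP; rewrite -ltnNge; apply: H.
move=> [H1 H2] j; rewrite ltnS leq_eqVlt => /orP [/eqP -> | jk]; last exact: H1.
by rewrite ltnNge; apply/negP.
Qed.

Lemma prod_iota_const (R : realType) (c : R) a n :
  \prod_(i <- iota a n) c = c ^+ n.
Proof.
elim: n a => [|n IH] a; first by rewrite big_nil expr0.
by rewrite /= big_cons IH exprS.
Qed.

Lemma prob_allsat (R : realType) (dO dE : measure_display) (Omega : measurableType dO)
  (E : measurableType dE) (P : probability Omega R) (D : probability E R)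
  (X : nat -> Omega -> E) (Prog : Type) (sat : Prog -> E -> bool) (q : Prog)
  (a n : nat) (eps : R) :
  measurable [set e | sat q e] -> iid P D X -> (eps%:E <= err D sat q)%E ->
  (P [set w | forall i, i \in iota a n -> sat q (X i w)] <= (expR (- (eps * n%:R)))%:E)%E.
Proof.
move=> hm [_ hiid] he.
have -> : P [set w | forall i, i \in iota a n -> sat q (X i w)] =
   (\prod_(i <- iota a n) fine (D [set e | sat q e]))%:E.
  exact: (hiid (iota a n) (iota_uniq a n) (fun _ => [set e | sat q e]) (fun _ => hm)).
rewrite prod_iota_const lee_fin.
have hC : [set e | sat q e] = ~` [set e | ~~ sat q e].
  by apply/seteqP; split => e /=; case: (sat q e).
have hC2 : [set e | ~~ sat q e] = ~` [set e | sat q e].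
  by apply/seteqP; split => e /=; case: (sat q e).
have hm2 : measurable [set e | ~~ sat q e] by rewrite hC2; exact: measurableC.
have hDA : D [set e | sat q e] = (1 - err D sat q)%E.
  by rewrite hC probability_setC.
have e0 : (0 <= err D sat q)%E by exact: measure_ge0.
have e1 : (err D sat q <= 1)%E.
  exact: probability_le1.
rewrite hDA; move: he e0 e1; case: (err D sat q) => [e | | ] //= he e0 e1.
rewrite lee_fin in he.
have e0' : 0 <= e by rewrite -lee_fin.
have e1' : e <= 1 by rewrite -lee_fin.
have h1 : 1 - e <= expR (- eps).
  apply: le_trans (expR_ge1Dx _); lra.
rewrite -mulNr expRM_natr.
apply: (lerXn2r n) => //; rewrite ?nnegrE ?expR_ge0 //; lra.
Qed.

Lemma union_bound_seq (d : measure_display) (T : measurableType d) (R : realType)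
  (P : probability T R) (I : Type) (F : I -> set T) (s : seq I) :
  (forall i, measurable (F i)) ->
  (P (\big[setU/set0]_(i <- s) F i) <= \sum_(i <- s) P (F i))%E.
Proof.
move=> hF; elim: s => [|i s IH]; first by rewrite !big_nil measure0.
rewrite !big_cons; apply: le_trans (measureU2 _ _ _) _ => //.
  exact: bigsetU_measurable.
exact: leeD2l.
Qed.

Lemma in_bigsetU (T : Type) (I : eqType) (F : I -> set T) (s : seq I) (w : T) (i : I) :
  i \in s -> F i w -> (\big[setU/set0]_(j <- s) F j) w.
Proof.
elim: s => [|j s IH] //; rewrite in_cons big_cons => /orP [/eqP -> Fw | ins Fw].
  by left.
by right; exact: IH.
Qed.

Lemma sum_const_count (R : realType) (I : Type) (s : seq I) (p : pred I) (c : R) :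
  \sum_(i <- s | p i) c = c *+ count p s.
Proof.
elim: s => [|i s IH]; first by rewrite big_nil.
by rewrite big_cons /= IH; case: (p i) => //=; rewrite mulrS.
Qed.

Lemma meas_allsat (dO dE : measure_display) (Omega : measurableType dO)
  (E : measurableType dE) (X : nat -> Omega -> E) (Prog : Type) (sat : Prog -> E -> bool)
  (q : Prog) (l : seq nat) :
  (forall i, measurable_fun setT (X i)) -> measurable [set e | sat q e] ->
  measurable [set w | forall i, i \in l -> sat q (X i w)].
Proof.
move=> hX hs; elim: l => [|i l IH].
  by rewrite (_ : [set w | _ ] = setT) //; apply/seteqP; split => w //=.
rewrite (_ : [set w | _] = (setT `&` X i @^-1` [set e | sat q e]) `&`
   [set w | forall i, i \in l -> sat q (X i w)]).
  by apply: measurableI => //; exact: hX.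
apply/seteqP; split => w /=.
  move=> H; split; first by split => //; apply: H; rewrite in_cons eqxx.
  by move=> j jl; apply: H; rewrite in_cons jl orbT.
by move=> [[_ H1] H2] j; rewrite in_cons => /orP [/eqP -> | jl] //; exact: H2.
Qed.

Lemma series_partial (R : realType) (r : R) (N : nat) : 0 <= r -> 2 * r <= 1 ->
  \sum_(0 <= k < N) r ^+ (2 ^ k) <= 2 * r - 2 * r ^+ N.+1.
Proof.
move=> r0 r1; elim: N => [|N IH]; first by rewrite big_nil expr1 subrr.
rewrite big_nat_recr //=.
have h1 : r ^+ (2 ^ N) <= r ^+ N.+1.
  apply: ler_wiXn2l => //; first lra.
  exact: ltn_expl.
have h2 : 2 * r ^+ N.+2 <= r ^+ N.+1.
  rewrite exprS mulrA; apply: ler_piMl; [exact: exprn_ge0 | by []].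
lra.
Qed.

Lemma series_bound (R : realType) (r : R) : 0 <= r -> 2 * r <= 1 ->
  (\sum_(0 <= k <oo) (r ^+ (2 ^ k))%:E <= (2 * r)%:E)%E.
Proof.
move=> r0 r1; apply: lime_le.
  by apply: is_cvg_nneseries => n _ _; rewrite lee_fin exprn_ge0.
apply: nearW => N; rewrite sumEFin lee_fin.
apply: le_trans (@series_partial R r N r0 r1) _.
by rewrite gerBl mulr_ge0 // exprn_ge0.
Qed.

Lemma Ak_bound (R : realType) (Prog : eqType) (dE : measure_display)
  (E : measurableType dE) (sat : Prog -> E -> bool) (psize : Prog -> nat)
  (S : seq E -> Prog) (n0 : nat) (dO : measure_display) (Omega : measurableType dO)
  (P : probability Omega R) (D : probability E R) (X : nat -> Omega -> E) (eps : R) (k : nat) :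
  size_count psize -> solver_consistent sat S ->
  (forall q, measurable [set e | sat q e]) -> iid P D X ->
  measurable [set w | stops_at psize S X n0 k w /\
                  (eps%:E <= err D sat (round_prog S X n0 k w))%E] ->
  (P [set w | stops_at psize S X n0 k w /\
                  (eps%:E <= err D sat (round_prog S X n0 k w))%E]
   <= ((2 * expR (- (eps * n0%:R))) ^+ (2 ^ k))%:E)%E.
Proof.
move=> sc cons hsat hiid hA.
have [L [uL HL]] := @enum_le Prog psize (2 ^ k)%N sc (expn_gt0 _ _).
pose pr := fun q => (eps%:E <= err D sat q)%E.
pose a := (n0 * (2 ^ k - 1))%N; pose n := (n0 * 2 ^ k)%N.
pose F := fun q => [set w | forall i, i \in iota a n -> sat q (X i w)].
have hF : forall q, measurable (F q).
  by move=> q; apply: meas_allsat; [exact: hiid.1 | exact: hsat].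
have sub : [set w | stops_at psize S X n0 k w /\
                  (eps%:E <= err D sat (round_prog S X n0 k w))%E]
   `<=` \big[setU/set0]_(q <- L | pr q) F q.
  move=> w [[hk _] he]; rewrite -big_filter.
  apply: (@in_bigsetU _ _ F _ w (round_prog S X n0 k w)).
    by rewrite mem_filter HL hk andbT.
  move=> i hi; have := allP (cons (round_sample X n0 k w)); apply.
  exact: map_f.
apply: le_trans (le_measure P _ _ sub) _.
- by rewrite inE.
- by rewrite inE -big_filter; apply: bigsetU_measurable.
rewrite -big_filter; apply: le_trans (@union_bound_seq _ _ _ P _ F _ hF) _.
rewrite big_filter.
apply: le_trans (lee_sum (g := fun _ => (expR (- (eps * n%:R)))%:E) _ _) _.
  by move=> q hq; exact: (@prob_allsat R dO dE Omega E P D X Prog sat q a n eps (hsat q) hiid hq).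
rewrite sumEFin lee_fin sum_const_count -(mulr_natl (expR _)).
have cnt : (count pr L <= 2 ^ (2 ^ k))%N.
  apply: leq_trans (count_size _ _) _; apply: sc => //; first by rewrite expn_gt0.
  by apply/allP => q; rewrite HL.
rewrite exprMn.
have -> : expR (- (eps * n%:R)) = expR (- (eps * n0%:R)) ^+ (2 ^ k).
  by rewrite -expRM_natr /n natrM mulrA mulNr.
apply: ler_wpM2r; first by rewrite exprn_ge0 // expR_ge0.
by rewrite -natrX ler_nat.
Qed.

Lemma part1 (R : realType) (Prog : eqType) (dE : measure_display)
  (E : measurableType dE) (sat : Prog -> E -> bool) (psize : Prog -> nat)
  (S : seq E -> Prog) (n0 : nat) :
  size_count psize -> solver_consistent sat S -> (1 <= n0)%N ->
  (forall (dO : measure_display) (Omega : measurableType dO)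
          (P : probability Omega R) (D : probability E R) (X : nat -> Omega -> E),
     (forall q, measurable [set e | sat q e]) ->
     iid P D X ->
     (forall (l : seq nat) (q : Prog), measurable [set w | S [seq X i w | i <- l] = q]) ->
     forall eps : R, 2 * ln 2 / n0%:R < eps < 1 ->
       (P [set w | exists k : nat, stops_at psize S X n0 k w /\
                  (eps%:E <= err D sat (round_prog S X n0 k w))%E]
       <= (4 * expR (- (eps * n0%:R)))%:E)%E).
Proof.
move=> sc cons n0pos dO Omega P D X hsat hiid hS eps /andP[he1 he2].
pose A := fun k => [set w | stops_at psize S X n0 k w /\
                  (eps%:E <= err D sat (round_prog S X n0 k w))%E].
have hrp : forall k q, measurable [set w | round_prog S X n0 k w = q].
  by move=> k q; exact: hS.
have hA : forall k, measurable (A k).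
  move=> k.
  rewrite (_ : A k = [set w | (psize (round_prog S X n0 k w) <= 2 ^ k)%N /\
       (eps%:E <= err D sat (round_prog S X n0 k w))%E] `&`
       [set w | forall j, (j < k)%N -> (2 ^ j < psize (round_prog S X n0 j w))%N]).
    apply: measurableI.
      apply: (@meas_pred _ _ _ psize (2 ^ k)%N (round_prog S X n0 k)
         (fun q => (psize q <= 2 ^ k)%N /\ (eps%:E <= err D sat q)%E) sc).
      - by rewrite expn_gt0.
      - exact: hrp.
      - by move=> q [].
    exact: (@meas_prefix _ _ _ psize (fun j => round_prog S X n0 j) sc).
  apply/seteqP; split => w /=.
    by move=> [[h1 h2] h3]; split.
  by move=> [[h1 h3] h2]; split.
have hev : [set w | exists k : nat, stops_at psize S X n0 k w /\
                  (eps%:E <= err D sat (round_prog S X n0 k w))%E] = \bigcup_k A k.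
  by apply/seteqP; split => w /=; [move=> [k hk]; exists k | move=> [k _ hk]; exists k].
rewrite hev.
have hU : measurable (\bigcup_k A k) by exact: bigcup_measurable.
have := @measure_sigma_subadditive _ _ _ P (\bigcup_k A k) A hA hU.
rewrite /subset_sigma_subadditive => /(_ (fun _ h => h)) hsub.
apply: le_trans hsub _.
apply: le_trans (lee_nneseries (v := fun k => ((2 * expR (- (eps * n0%:R))) ^+ (2 ^ k))%:E) _ _) _.
- by move=> k _ _; exact: measure_ge0.
- move=> k _; exact: (@Ak_bound R Prog dE E sat psize S n0 dO Omega P D X eps k sc cons hsat hiid (hA k)).
have n0R : (0 : R) < n0%:R by rewrite ltr0n.
have ln2 : 0 < ln (2 : R) by rewrite ln_gt0 // ltr1n.
have hx : 2 * ln 2 < eps * n0%:R by rewrite -ltr_pdivrMr.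
have e4 : 4 * expR (- (eps * n0%:R)) <= 1.
  have : expR (- (eps * n0%:R)) <= expR (- (2 * ln 2)).
    by rewrite ler_expR lerN2 ltW.
  rewrite (_ : (2:R) * ln 2 = ln 2 + ln 2); last by ring.
  rewrite [X in _ <= X]expRN expRD lnK ?posrE // => h.
  lra.
have -> : 4 * expR (- (eps * n0%:R)) = 2 * (2 * expR (- (eps * n0%:R))) by ring.
apply: series_bound; first by rewrite mulr_ge0 // expR_ge0.
lra.
Qed.
Lemma growth (R : realType) (K beta : R) (n0 : nat) : 0 <= beta < 1 -> (1 <= n0)%N ->
  exists k : nat, K * (n0 * 2 ^ k)%:R `^ beta <= (2 ^ k)%:R.
Proof.
move=> /andP[b0 b1] n0pos.
have a0 : 0 < 1 - beta by rewrite subr_gt0.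
have ln2 : 0 < ln (2 : R) by rewrite ln_gt0 // ltr1n.
set k := (Num.truncn ((K * n0%:R) / ((1 - beta) * ln 2))).+1.
exists k.
have n0R : (1 : R) <= n0%:R by rewrite ler1n.
have x0 : (0 : R) < (n0 * 2 ^ k)%:R by rewrite ltr0n muln_gt0 expn_gt0 n0pos.
have -> : (n0 * 2 ^ k)%:R `^ beta = expR (beta * ln ((n0 * 2 ^ k)%:R : R)).
  by rewrite /powR gt_eqF.
set L := ln ((n0 * 2 ^ k)%:R : R).
have xE : expR L = (n0 * 2 ^ k)%:R by rewrite /L lnK // posrE.
have Lge : k%:R * ln 2 <= L.
  rewrite /L natrM lnM ?posrE ?ltr0n ?expn_gt0 // natrX lnXn // mulr_natl.
  by rewrite lerDr ln_ge0.
case: (leP K 0) => K0.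
  have h : K * expR (beta * L) <= 0 by rewrite mulr_le0_ge0 // expR_ge0.
  exact: (le_trans h (ler0n _ _)).
have key : K * n0%:R <= expR ((1 - beta) * L).
  apply: le_trans (expR_ge1Dx _).
  have h1 : (1-beta)*L <= 1 + (1-beta)*L by rewrite -subr_ge0 addrK.
  apply: le_trans h1.
  have h2 : (1-beta)*(k%:R * ln 2) <= (1-beta)*L by rewrite ler_pM2l.
  apply: le_trans h2.
  have := Num.Theory.truncnS_gt ((K * n0%:R) / ((1 - beta) * ln 2)).
  rewrite -/k ltr_pdivrMr ?mulr_gt0 // => /ltW.
  by rewrite mulrCA mulrA.
have -> : ((2 ^ k)%N%:R : R) = expR L / n0%:R.
  by rewrite xE natrM mulrC mulKf // gt_eqF // (lt_le_trans ltr01).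
have -> : expR L = expR (beta * L) * expR ((1 - beta) * L).
  by rewrite -expRD; congr expR; ring.
rewrite ler_pdivlMr ?(lt_le_trans ltr01) // -mulrA mulrC -mulrA [_ * K]mulrC.
by rewrite ler_pM2l ?expR_gt0 // mulrC.
Qed.

Lemma part2 (R : realType) (Prog : eqType) (E : Type) (sat : Prog -> E -> bool) (psize : Prog -> nat)
  (S : seq E -> Prog) (n0 : nat) : (1 <= n0)%N ->
  (exists p, correct sat p) ->
   forall alpha beta : R, 1 <= alpha -> 0 <= beta < 1 ->
   occam sat psize S alpha beta ->
   forall (Omega : Type) (X : nat -> Omega -> E) (w : Omega),
     exists k : nat, stops_at psize S X n0 k w.
Proof.
move=> n0pos [p pc] alpha beta _ hb [c H] Omega X w.
have ex : exists k, (psize (round_prog S X n0 k w) <= 2 ^ k)%N.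
  have [k hk] := @growth R (c * (psize p)%:R `^ alpha) beta n0 hb n0pos.
  exists k; rewrite -(ler_nat R); apply: le_trans hk.
  have := H (round_sample X n0 k w) p pc.
  by rewrite /round_sample size_map size_iota.
case: (ex_minnP ex) => m hm hmin.
exists m; split => // j jm.
by rewrite ltnNge; apply/negP => /hmin; rewrite leqNgt jm.
Qed.

Theorem theorem5 (R : realType) (Prog : eqType) (dE : measure_display)
  (E : measurableType dE) (sat : Prog -> E -> bool) (psize : Prog -> nat)
  (S : seq E -> Prog) (n0 : nat) :
  size_count psize -> solver_consistent sat S -> (1 <= n0)%N ->
  (* (1) *)
  (forall (dO : measure_display) (Omega : measurableType dO)
          (P : probability Omega R) (D : probability E R) (X : nat -> Omega -> E),
     (forall q, measurable [set e | sat q e]) ->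
     iid P D X ->
     (forall (l : seq nat) (q : Prog), measurable [set w | S [seq X i w | i <- l] = q]) ->
     forall eps : R, 2 * ln 2 / n0%:R < eps < 1 ->
       (P [set w | exists k : nat, stops_at psize S X n0 k w /\
                  (eps%:E <= err D sat (round_prog S X n0 k w))%E]
       <= (4 * expR (- (eps * n0%:R)))%:E)%E)
  /\
  (* (2) *)
  ((exists p, correct sat p) ->
   forall alpha beta : R, 1 <= alpha -> 0 <= beta < 1 ->
   occam sat psize S alpha beta ->
   forall (Omega : Type) (X : nat -> Omega -> E) (w : Omega),
     exists k : nat, stops_at psize S X n0 k w).
Proof.
move=> sc cons n0pos; split.
  exact: (@part1 R Prog dE E sat psize S n0 sc cons n0pos).
exact: (@part2 R Prog E sat psize S n0 n0pos).
Qed.
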